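(* Let $S$ be an AG-groupoid that satisfies both $a(bc)=(ab)(ca)$ and $(ab)c=(ca)(bc)$ for all $a,b,c\in S$. Then $S$ is a semigroup, i.e. $a(bc)=(ab)c$ for all $a,b,c\in S$.
   Context: A groupoid is a set $S$ with a binary operation written as juxtaposition. An AG-groupoid is a groupoid satisfying the left invertive law $(ab)c=(cb)a$ for all $a,b,c\in S$. Such an $S$ satisfying both identities in the claim (left abelian distributive and right abelian distributive) is called an AD-AG-groupoid. *)

(* Defs.v *)
Definition left_invertive {S : Type} (op : S -> S -> S) : Prop :=
  forall a b c : S, op (op a b) c = op (op c b) a.

Definition is_AG_groupoid {S : Type} (op : S -> S -> S) : Prop :=
  left_invertive op.

Definition left_abelian_distributive {S : Type} (op : S -> S -> S) : Prop :=
  forall a b c : S, op a (op b c) = op (op a b) (op c a).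

Definition right_abelian_distributive {S : Type} (op : S -> S -> S) : Prop :=
  forall a b c : S, op (op a b) c = op (op c a) (op b c).

Definition associative_op {S : Type} (op : S -> S -> S) : Prop :=
  forall a b c : S, op a (op b c) = op (op a b) c.

(* Main.v *)
Require Import Defs.

Theorem mainTheorem7 (S : Type) (op : S -> S -> S) :
  is_AG_groupoid op ->
  left_abelian_distributive op ->
  right_abelian_distributive op ->
  associative_op op.
Proof.
  intros LI LAD RAD.
  assert (Med : forall a b c d, op (op a b) (op c d) = op (op a c) (op b d)).
  { intros a b c d. rewrite (LI a b (op c d)), (LI c d b), (LI (op b d) c a). reflexivity. }
  assert (C : forall a b c, op a (op b c) = op (op b c) a).
  { intros a b c. rewrite (RAD b c a), (LAD a b c). reflexivity. }
  intros a b c.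
  rewrite (LI a b c), <- (C a c b), (LAD a c b), (Med a c b a), (LAD a b c).
  reflexivity.
Qed.
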